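(* Let $S$ be a semiring and $M$ a left $S$-semimodule such that every subtractive subsemimodule of $M$ is a direct summand of $M$. Then every left $S$-semimodule is $M$-$e$-projective.
   Context: A semiring $(S,+,0,\cdot,1)$ consists of a commutative monoid $(S,+,0)$ and a monoid $(S,\cdot,1)$ with $0\neq 1$, absorbing zero and both distributive laws; left $S$-semimodules and $S$-linear maps are as for modules without subtraction. A subsemimodule $K\le M$ is subtractive if $m+k=k'$ with $k,k'\in K$ implies $m\in K$. $K$ is a direct summand of $M$ if $M=K\oplus K'$ for some subsemimodule $K'$, meaning every $m\in M$ can be written uniquely as $m=k+k'$ with $k\in K$, $k'\in K'$. For an $S$-linear $h:X\to Y$, $\mathrm{Ker}(h)=\{x\mid h(x)=0\}$; $h$ is $k$-normal if $h(x)=h(x')$ implies $x+k=x'+k'$ for some $k,k'\in\mathrm{Ker}(h)$. A short exact sequence $0\to L\xrightarrow{f}M\xrightarrow{g}N\to0$ (of semimodules or commutative monoids) means: $f$ injective, $f(L)=\mathrm{Ker}(g)$, $g$ surjective and $k$-normal. $P$ is $M$-$e$-projective if for every short exact sequence $0\to L\xrightarrow{f}M\xrightarrow{g}N\to0$ of left $S$-semimodules with middle term $M$, the sequence $0\to\mathrm{Hom}_S(P,L)\xrightarrow{f\circ-}\mathrm{Hom}_S(P,M)\xrightarrow{g\circ-}\mathrm{Hom}_S(P,N)\to0$ is a short exact sequence of commutative monoids (Hom-sets with pointwise addition). *)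

(* Defs.v *)
From HB Require Import structures.
From mathcomp Require Import all_boot all_algebra.
Set Implicit Arguments. Unset Strict Implicit. Unset Printing Implicit Defensive.
Import GRing.Theory.
Local Open Scope ring_scope.

Definition is_linear (S : nzSemiRingType) (U V : lSemiModType S) (h : U -> V) : Prop :=
  h 0 = 0 /\ (forall x y, h (x + y) = h x + h y) /\ (forall (a : S) x, h (a *: x) = a *: h x).

Definition subsemimodule (S : nzSemiRingType) (M : lSemiModType S) (K : M -> Prop) : Prop :=
  K 0 /\ (forall x y, K x -> K y -> K (x + y)) /\ (forall (a : S) x, K x -> K (a *: x)).

Definition subtractive (S : nzSemiRingType) (M : lSemiModType S) (K : M -> Prop) : Prop :=
  forall m k k', K k -> K k' -> m + k = k' -> K m.

Definition direct_summand (S : nzSemiRingType) (M : lSemiModType S) (K : M -> Prop) : Prop :=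
  exists K' : M -> Prop, subsemimodule K' /\
    forall m, (exists k k', K k /\ K' k' /\ m = k + k') /\
      (forall k1 k1' k2 k2', K k1 -> K' k1' -> K k2 -> K' k2' ->
         m = k1 + k1' -> m = k2 + k2' -> k1 = k2 /\ k1' = k2').

(* Short exact sequence 0 -> L -f-> M -g-> N -> 0 of commutative monoids whose
   carriers are given as subsets DL, DM, DN of ambient types (this allows
   Hom-sets, i.e. the linear maps among all functions, with pointwise
   operations). addM is the addition of the middle monoid, zN the zero of N. *)
Definition ses_on (L M N : Type) (DL : L -> Prop) (DM : M -> Prop) (DN : N -> Prop)
  (addM : M -> M -> M) (zN : N) (f : L -> M) (g : M -> N) : Prop :=
  (forall x y, DL x -> DL y -> f x = f y -> x = y) /\
  (forall m, DM m -> ((exists l, DL l /\ f l = m) <-> g m = zN)) /\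
  (forall n, DN n -> exists m, DM m /\ g m = n) /\
  (forall m m', DM m -> DM m' -> g m = g m' ->
     exists k k', DM k /\ DM k' /\ g k = zN /\ g k' = zN /\ addM m k = addM m' k').

Definition ses_mod (S : nzSemiRingType) (L M N : lSemiModType S) (f : L -> M) (g : M -> N) : Prop :=
  is_linear f /\ is_linear g /\
  ses_on (fun _ : L => True) (fun _ : M => True) (fun _ : N => True) +%R 0 f g.

Definition e_projective (S : nzSemiRingType) (M P : lSemiModType S) : Prop :=
  forall (L N : lSemiModType S) (f : L -> M) (g : M -> N),
    ses_mod f g ->
    ses_on (fun h : P -> L => is_linear h) (fun h : P -> M => is_linear h)
           (fun h : P -> N => is_linear h)
           (fun h h' : P -> M => fun x => h x + h' x) (fun _ : P => 0 : N)
           (fun h : P -> L => f \o h) (fun h : P -> M => g \o h).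

(* Main.v *)
Require Import Defs.
From HB Require Import structures.
From mathcomp Require Import all_boot all_algebra.
From Stdlib Require Import ClassicalEpsilon FunctionalExtensionality.
Import GRing.Theory.
Local Open Scope ring_scope.

Theorem mainTheorem9 (S : nzSemiRingType) (M : lSemiModType S) :
  (forall K : M -> Prop, subsemimodule K -> subtractive K -> direct_summand K) ->
  forall P : lSemiModType S, e_projective M P.
Proof.
move=> Hds P L N f g [[f0 [fD fZ]] [[g0 [gD gZ]] [finj [fker [gsurj gnorm]]]]].
pose K := fun m : M => g m = 0.
have Ksub : subsemimodule K.
  split; first exact: g0.
  split; first by move=> x y; rewrite /K gD => -> ->; rewrite addr0.
  by move=> a x; rewrite /K gZ => ->; rewrite scaler0.
have Ksubt : subtractive K.
  by move=> m k k' Hk Hk' e; move: Hk'; rewrite /K -e gD Hk addr0.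
have [K' [[K'0 [K'D K'Z]] Hsum]] := Hds K Ksub Ksubt.
have [pq Hpq] : exists pq : M -> M * M, forall m,
    K (pq m).1 /\ K' (pq m).2 /\ m = (pq m).1 + (pq m).2.
  apply: (choice (fun m q => K q.1 /\ K' q.2 /\ m = q.1 + q.2)) => m.
  have [[k [k' [Hk [Hk' e]]]] _] := Hsum m.
  by exists (k, k').
pose p := fun m => (pq m).1.
pose p' := fun m => (pq m).2.
have pK : forall m, K (p m) by move=> m; case: (Hpq m).
have pK' : forall m, K' (p' m) by move=> m; case: (Hpq m) => _ [].
have pe : forall m, m = p m + p' m by move=> m; case: (Hpq m) => _ [].
have uniq : forall m k1 k1' k2 k2', K k1 -> K' k1' -> K k2 -> K' k2' ->
   m = k1 + k1' -> m = k2 + k2' -> k1 = k2 /\ k1' = k2'.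
  by move=> m; case: (Hsum m).
have inj' : forall u v, K' u -> K' v -> g u = g v -> u = v.
  move=> u v Hu Hv e.
  have [k [k' [_ [_ [Hk [Hk' e2]]]]]] := gnorm u v I I e.
  have e3 : u + k = k' + v by rewrite e2 addrC.
  by have [_ ->] := uniq (u + k) k u k' v Hk Hu Hk' Hv (addrC _ _) e3.
have gp' : forall m, g (p' m) = g m.
  by move=> m; rewrite {2}(pe m) gD pK add0r.
have pD : forall x y, p (x + y) = p x + p y.
  move=> x y.
  have e3 : x + y = (p x + p y) + (p' x + p' y).
    by rewrite {1}(pe x) {1}(pe y) addrACA.
  by have [-> _] := uniq (x + y) _ _ (p x + p y) (p' x + p' y) (pK _) (pK' _)
     (proj1 (proj2 Ksub) _ _ (pK x) (pK y)) (K'D _ _ (pK' x) (pK' y)) (pe _) e3.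
have pZ : forall a x, p (a *: x) = a *: p x.
  move=> a x.
  have e3 : a *: x = a *: p x + a *: p' x by rewrite {1}(pe x) scalerDr.
  by have [-> _] := uniq (a *: x) _ _ (a *: p x) (a *: p' x) (pK _) (pK' _)
     (proj2 (proj2 Ksub) _ _ (pK x)) (K'Z _ _ (pK' x)) (pe _) e3.
have p0 : p 0 = 0.
  have e3 : (0 : M) = 0 + 0 by rewrite addr0.
  by have [-> _] := uniq 0 _ _ 0 0 (pK _) (pK' _) g0 K'0 (pe _) e3.
split.
  move=> h1 h2 _ _ e; apply: functional_extensionality => x.
  by apply: finj => //; exact: (equal_f e x).
split.
  move=> h [h0 [hD hZ]]; split.
    move=> [l [_ <-]]; apply: functional_extensionality => x /=.
    by apply/(proj1 (fker _ I)); exists (l x).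
  move=> e.
  have [l Hl] : exists l : P -> L, forall x, f (l x) = h x.
    apply: (choice (fun x l => f l = h x)) => x.
    have [l [_ Hl]] := proj2 (fker (h x) I) (equal_f e x).
    by exists l.
  exists l; split; last by apply: functional_extensionality => x; exact: Hl.
  split; first by apply: finj => //; rewrite Hl h0 f0.
  split; first by move=> x y; apply: finj => //; rewrite fD !Hl hD.
  by move=> a x; apply: finj => //; rewrite fZ !Hl hZ.
split.
  move=> n [n0 [nD nZ]].
  have [m0 Hm0] : exists m0 : P -> M, forall x, g (m0 x) = n x.
    apply: (choice (fun x m => g m = n x)) => x.
    by have [m [_ Hm]] := gsurj (n x) I; exists m.
  exists (fun x => p' (m0 x)); split; last first.
    by apply: functional_extensionality => x /=; rewrite gp' Hm0.
  split; first by apply: inj' => //; rewrite gp' Hm0 n0 g0.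
  split.
    move=> x y; apply: inj' => //; first exact: K'D.
    by rewrite gD !gp' !Hm0 nD.
  move=> a x; apply: inj' => //; first exact: K'Z.
  by rewrite gZ !gp' !Hm0 nZ.
move=> h h' [h0 [hD hZ]] [h'0 [h'D h'Z]] e.
have lin : forall q : P -> M, is_linear q -> is_linear (fun x => p (q x)).
  move=> q [q0 [qD qZ]]; split; first by rewrite q0 p0.
  by split => [x y|a x]; rewrite ?qD ?qZ ?pD ?pZ.
exists (fun x => p (h' x)), (fun x => p (h x)).
split; first exact: lin.
split; first exact: lin.
split; first by apply: functional_extensionality => x /=; exact: pK.
split; first by apply: functional_extensionality => x /=; exact: pK.
apply: functional_extensionality => x /=.
have ee : p' (h x) = p' (h' x).
  by apply: inj' => //; rewrite !gp'; exact: (equal_f e x).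
rewrite {1}(pe (h x)) {2}(pe (h' x)) ee.
by rewrite [LHS]addrAC [RHS]addrC addrA.
Qed.
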